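(* Let $X=[0,\bar a]$ be a nonempty interval and $f:X\to X$ satisfy: (i) $f$ is strictly concave and Lipschitz continuous; (ii) $f(x)\ge 0$ for all $x\in X$; (iii) letting $\bar x\in X$ be the point at which $f$ attains its maximum on $X$ (so $f$ is strictly increasing on $I=[0,\bar x)$ and strictly decreasing on $D=[\bar x,\bar a]$), the restriction of $f$ to $D$ is $L$-Lipschitz with $L<1$; (iv) there is a positive $b\in X$ with $f(b)<b$. Then for every $x_0\in X$, the fixed-point iteration $x_{k+1}=f(x_k)$ converges to a fixed point of $f$.
   Context: A function $f$ is $L$-Lipschitz if $|f(x)-f(y)|\le L|x-y|$ for all $x,y$; Lipschitz continuous if it is $L$-Lipschitz for some $L>0$. $f$ is strictly concave if $f((1-\lambda)x+\lambda y)>(1-\lambda)f(x)+\lambda f(y)$ for all $x\ne y$ and $0<\lambda<1$. *)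

(* Defs.v *)
From Stdlib Require Export Reals Lra.
Open Scope R_scope.

Definition in_Icc (lo hi x : R) : Prop := lo <= x <= hi.

Definition lipschitz_on (S : R -> Prop) (L : R) (f : R -> R) : Prop :=
  forall x y, S x -> S y -> Rabs (f x - f y) <= L * Rabs (x - y).

Definition lipschitz_continuous_on (S : R -> Prop) (f : R -> R) : Prop :=
  exists L, 0 < L /\ lipschitz_on S L f.

Definition strictly_concave_on (S : R -> Prop) (f : R -> R) : Prop :=
  forall x y lam, S x -> S y -> x <> y -> 0 < lam < 1 ->
    f ((1 - lam) * x + lam * y) > (1 - lam) * f x + lam * f y.

Fixpoint fp_iter (f : R -> R) (x0 : R) (k : nat) : R :=
  match k with
  | O => x0
  | S k' => f (fp_iter f x0 k')
  end.

(* Main.v *)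
Require Import Defs.
From Stdlib Require Import Reals Lra Lia Classical.
Open Scope R_scope.

Lemma Rabs_both (x c : R) : Rabs x <= c -> -c <= x <= c.
Proof. unfold Rabs; destruct (Rcase_abs x); lra. Qed.

Lemma Rabs_both_lt (x c : R) : Rabs x < c -> -c < x < c.
Proof. unfold Rabs; destruct (Rcase_abs x); lra. Qed.

Lemma iter_shift f x0 N k : fp_iter f x0 (N + k) = fp_iter f (fp_iter f x0 N) k.
Proof. induction k as [|k IH]; simpl. now rewrite Nat.add_0_r.
  rewrite Nat.add_succ_r; simpl; now rewrite IH. Qed.

Lemma cv_shift (u : nat -> R) N l : Un_cv (fun k => u (N + k)%nat) l -> Un_cv u l.
Proof.
  intros H eps He. destruct (H eps He) as [M HM]. exists (N + M)%nat.
  intros n Hn. replace n with (N + (n - N))%nat by lia. apply HM. lia.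
Qed.

Lemma iter_in a f x0 : (forall x, in_Icc 0 a x -> in_Icc 0 a (f x)) ->
  in_Icc 0 a x0 -> forall k, in_Icc 0 a (fp_iter f x0 k).
Proof. intros Hf H0 k; induction k; simpl; auto. Qed.

Lemma limit_fixed a f K x0 l : (forall x, in_Icc 0 a x -> in_Icc 0 a (f x)) ->
  0 < K -> lipschitz_on (in_Icc 0 a) K f -> in_Icc 0 a x0 ->
  Un_cv (fp_iter f x0) l -> in_Icc 0 a l /\ f l = l.
Proof.
  intros Hf HK HL H0 Hcv.
  pose proof (iter_in a f x0 Hf H0) as Hin.
  assert (Hl : in_Icc 0 a l).
  { unfold in_Icc; split; apply Rnot_lt_le; intro Hc.
    - destruct (Hcv (0 - l)) as [N HN]; [lra|].
      specialize (HN N (le_n _)); unfold Rdist in HN. apply Rabs_both_lt in HN.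
      destruct (Hin N); lra.
    - destruct (Hcv (l - a)) as [N HN]; [lra|].
      specialize (HN N (le_n _)); unfold Rdist in HN. apply Rabs_both_lt in HN.
      destruct (Hin N); lra. }
  split; auto.
  destruct (Req_dec (f l) l) as [E|E]; auto. exfalso.
  set (e := Rabs (f l - l)).
  assert (He : 0 < e) by (apply Rabs_pos_lt; lra).
  destruct (Hcv (e / (2 * (K + 1)))) as [N HN].
  { apply Rlt_gt, Rdiv_lt_0_compat; lra. }
  pose proof (HN N (le_n _)) as H1. pose proof (HN (S N) (le_S _ _ (le_n _))) as H2.
  unfold Rdist in H1, H2. simpl in H2.
  pose proof (HL (fp_iter f x0 N) l (Hin N) Hl) as H3.
  assert (Hq : e / (2 * (K + 1)) * (2 * (K+1)) = e) by (field; lra).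
  assert (H4 : Rabs (f l - l) <= Rabs (f l - f (fp_iter f x0 N)) + Rabs (f (fp_iter f x0 N) - l)).
  { replace (f l - l) with ((f l - f (fp_iter f x0 N)) + (f (fp_iter f x0 N) - l)) by ring.
    apply Rabs_triang. }
  rewrite (Rabs_minus_sym (f l) (f (fp_iter f x0 N))) in H4.
  fold e in H4.
  set (t := e / (2 * (K + 1))) in *.
  assert (K * Rabs (fp_iter f x0 N - l) <= K * t) by (apply Rmult_le_compat_l; lra).
  assert (0 < t) by (unfold t; apply Rdiv_lt_0_compat; lra).
  assert (e <= K * t + t) by lra.
  assert ((K + 1) * t * 2 = e) by (rewrite <- Hq; ring).
  nra.
Qed.

Lemma conv_up a f y0 : (forall k, in_Icc 0 a (fp_iter f y0 k)) ->
  (forall k, fp_iter f y0 k <= fp_iter f y0 (S k)) -> exists l, Un_cv (fp_iter f y0) l.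
Proof.
  intros Hin Hg. destruct (growing_cv (fp_iter f y0)) as [l Hl]; eauto.
  exists a. intros x [i ->]. destruct (Hin i); lra.
Qed.

Lemma conv_down a f y0 : (forall k, in_Icc 0 a (fp_iter f y0 k)) ->
  (forall k, fp_iter f y0 (S k) <= fp_iter f y0 k) -> exists l, Un_cv (fp_iter f y0) l.
Proof.
  intros Hin Hg. destruct (decreasing_cv (fp_iter f y0)) as [l Hl]; eauto.
  exists 0. intros x [i ->]. unfold opp_seq. destruct (Hin i); lra.
Qed.

Lemma cv_from f x0 N l : Un_cv (fp_iter f (fp_iter f x0 N)) l -> Un_cv (fp_iter f x0) l.
Proof.
  intros H. apply (cv_shift _ N). intros eps He. destruct (H eps He) as [M HM].
  exists M. intros n Hn. rewrite iter_shift. auto.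
Qed.

Theorem mainTheorem8 (abar : R) (f : R -> R) (xbar : R) :
  0 <= abar ->
  (forall x, in_Icc 0 abar x -> in_Icc 0 abar (f x)) ->
  strictly_concave_on (in_Icc 0 abar) f ->
  lipschitz_continuous_on (in_Icc 0 abar) f ->
  (forall x, in_Icc 0 abar x -> 0 <= f x) ->
  in_Icc 0 abar xbar ->
  (forall x, in_Icc 0 abar x -> f x <= f xbar) ->
  (exists L, L < 1 /\ lipschitz_on (in_Icc xbar abar) L f) ->
  (exists b, in_Icc 0 abar b /\ 0 < b /\ f b < b) ->
  forall x0, in_Icc 0 abar x0 ->
    exists xs, in_Icc 0 abar xs /\ f xs = xs /\ Un_cv (fp_iter f x0) xs.
Proof.
  intros Ha Hf Hconc [K [HK HLK]] Hpos Hxb Hmax [L [HL1 HLD]] _ x0 Hx0.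
  unfold in_Icc in *.
  set (L0 := Rmax 0 L).
  assert (HL0a : 0 <= L0) by apply Rmax_l.
  assert (HL0b : L0 < 1) by (apply Rmax_lub_lt; lra).
  assert (HLD0 : forall x y, xbar <= x <= abar -> xbar <= y <= abar ->
            Rabs (f x - f y) <= L0 * Rabs (x - y)).
  { intros x y Hx Hy. eapply Rle_trans. apply HLD; auto.
    apply Rmult_le_compat_r. apply Rabs_pos. apply Rmax_r. }
  pose proof (iter_in abar f x0 Hf Hx0) as Hin. unfold in_Icc in Hin.
  assert (Hf0 : 0 <= f 0) by (apply Hpos; lra).
  assert (mono : forall x y, 0 <= x -> x <= y -> y <= xbar -> f x <= f y).
  { intros x y H1 H2 H3.
    destruct (Req_dec y xbar) as [->|Hy]. apply Hmax; lra.
    destruct (Req_dec x y) as [->|Hxy]. lra.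
    set (lam := (y - x) / (xbar - x)).
    assert (Hl0 : 0 < lam) by (unfold lam; apply Rdiv_lt_0_compat; lra).
    assert (Hl1 : lam < 1) by (unfold lam; apply (Rmult_lt_reg_r (xbar - x)); [lra|];
                              field_simplify; lra).
    assert (Heq : (1 - lam) * x + lam * xbar = y) by (unfold lam; field; lra).
    pose proof (Hconc x xbar lam) as Hc. unfold in_Icc in Hc.
    rewrite Heq in Hc. assert (f x <= f xbar) by (apply Hmax; lra).
    assert (lam * (f xbar - f x) >= 0) by nra.
    assert (f y > (1 - lam) * f x + lam * f xbar) by (apply Hc; lra). nra. }
  set (E := fun x => (0 <= x <= abar) /\ x <= f x).
  destruct (completeness E) as [p [Hub Hlub]].
  { exists abar. intros x [[_ H] _]. exact H. }
  { exists 0. split; lra. }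
  assert (Hp0 : 0 <= p) by (apply Hub; split; lra).
  assert (Hpa : p <= abar) by (apply Hlub; intros x [[_ H] _]; exact H).
  assert (Hbelow : forall x, 0 <= x < p -> x <= f x).
  { intros x Hx. destruct (classic (exists y, E y /\ x < y)) as [[y [[Hy0 Hy1] Hy]]|Hn].
    - destruct (Req_dec x 0) as [->|Hx0']. exact Hf0.
      set (lam := x / y).
      assert (Hl0 : 0 < lam) by (unfold lam; apply Rdiv_lt_0_compat; lra).
      assert (Hl1 : lam < 1) by (unfold lam; apply (Rmult_lt_reg_r y); [lra|];
                                field_simplify; lra).
      assert (Heq : (1 - lam) * 0 + lam * y = x) by (unfold lam; field; lra).
      pose proof (Hconc 0 y lam) as Hc. unfold in_Icc in Hc. rewrite Heq in Hc.
      assert (f x > (1 - lam) * f 0 + lam * f y) by (apply Hc; lra).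
      assert (lam * y <= lam * f y) by (apply Rmult_le_compat_l; lra).
      assert ((1 - lam) * f 0 >= 0) by nra.
      assert (lam * y = x) by (unfold lam; field; lra). lra.
    - assert (is_upper_bound E x).
      { intros z Ez. apply Rnot_lt_le. intro. apply Hn. eauto. }
      assert (p <= x) by auto. lra. }
  assert (Habove : forall x, p < x <= abar -> f x < x).
  { intros x Hx. apply Rnot_le_lt. intro. assert (x <= p) by (apply Hub; split; lra). lra. }
  assert (Hfp : f p = p).
  { destruct (Rtotal_order (f p) p) as [Hlt|[Heq|Hgt]]; auto; exfalso.
    - assert (p > 0). { destruct (Req_dec p 0) as [E0|]; [|lra]. rewrite E0 in Hlt. lra. }
      set (e := (p - f p) / (K + 1)).
      assert (He : 0 < e) by (unfold e; apply Rdiv_lt_0_compat; lra).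
      assert (He2 : e * (K + 1) = p - f p) by (unfold e; field; lra).
      assert (Hy : exists y, 0 <= y < p /\ p - e / 2 <= y).
      { exists (Rmax 0 (p - e/2)). split; [split|].
        apply Rmax_l. apply Rmax_lub_lt; lra. apply Rmax_r. }
      destruct Hy as [y [Hy1 Hy2]].
      assert (y <= f y) by auto.
      pose proof (HLK y p ltac:(unfold in_Icc; lra) ltac:(unfold in_Icc; lra)) as H1.
      rewrite (Rabs_left (y - p)) in H1 by lra. apply Rabs_both in H1.
      assert (K * - (y - p) <= K * (e/2)) by (apply Rmult_le_compat_l; lra).
      assert (HKe: K * e = p - f p - e) by (rewrite <- He2; ring). lra.
    - assert (p < abar). { destruct (Req_dec p abar) as [E0|]; [|lra].
        rewrite E0 in Hgt. assert (f abar <= abar) by (apply Hf; lra). lra. }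
      set (e := (f p - p) / (K + 1)).
      assert (He : 0 < e) by (unfold e; apply Rdiv_lt_0_compat; lra).
      assert (He2 : e * (K + 1) = f p - p) by (unfold e; field; lra).
      assert (Hy : exists y, p < y <= abar /\ y <= p + e / 2).
      { exists (Rmin abar (p + e/2)). split; [split|].
        apply Rmin_glb_lt; lra. apply Rmin_l. apply Rmin_r. }
      destruct Hy as [y [Hy1 Hy2]].
      assert (f y < y) by auto.
      pose proof (HLK y p ltac:(unfold in_Icc; lra) ltac:(unfold in_Icc; lra)) as H1.
      rewrite (Rabs_right (y - p)) in H1 by lra. apply Rabs_both in H1.
      assert (K * (y - p) <= K * (e/2)) by (apply Rmult_le_compat_l; lra).
      assert (HKe: K * e = f p - p - e) by (rewrite <- He2; ring). lra.
  }
  assert (Hpin : 0 <= p <= abar) by lra.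
  destruct (Rle_lt_dec p xbar) as [Hpx|Hpx].
  -
    assert (inv : forall x, 0 <= x <= p -> x <= f x <= p).
    { intros x Hx. split.
      - destruct (Req_dec x p) as [->|]; [lra|]. apply Hbelow; lra.
      - assert (f x <= f p) by (apply mono; lra). lra. }
    destruct (classic (exists N, fp_iter f x0 N <= p)) as [[N HN]|Hn].
    + assert (Hy0: 0 <= fp_iter f x0 N <= p) by (destruct (Hin N); lra).
      set (y0 := fp_iter f x0 N) in *.
      assert (Hy : forall k, 0 <= fp_iter f y0 k <= p).
      { induction k; simpl. exact Hy0. pose proof (inv _ IHk). lra. }
      destruct (conv_up abar f y0) as [l Hl].
      { intros k; pose proof (Hy k); unfold in_Icc; lra. }
      { intros k; simpl; apply inv; auto. }
      apply cv_from in Hl.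
      destruct (limit_fixed abar f K x0 l Hf HK HLK Hx0 Hl) as [H1 H2].
      exists l; auto.
    + destruct (conv_down abar f x0) as [l Hl]; auto.
      { intros k. simpl. assert (p < fp_iter f x0 k).
        { apply Rnot_le_lt. intro. apply Hn. eauto. }
        apply Rlt_le, Habove. destruct (Hin k); lra. }
      destruct (limit_fixed abar f K x0 l Hf HK HLK Hx0 Hl) as [H1 H2].
      exists l; auto.
  -
    assert (Hfxbar : f xbar <= p + L0 * (p - xbar)).
    { pose proof (HLD0 xbar p ltac:(lra) ltac:(lra)) as H1.
      rewrite Hfp, (Rabs_left (xbar - p)) in H1 by lra. apply Rabs_both in H1. lra. }
    assert (contr : forall x, xbar <= x <= abar -> Rabs (f x - p) <= L0 * Rabs (x - p)).
    { intros x Hx. rewrite <- Hfp at 1. apply HLD0; lra. }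
    assert (dist : forall x, 0 <= x <= abar -> Rabs (f x - p) <= Rabs (x - p)).
    { intros x Hx. destruct (Rle_lt_dec xbar x).
      - eapply Rle_trans. apply contr; lra.
        pose proof (Rabs_pos (x - p)). nra.
      - rewrite (Rabs_left (x - p)) by lra. apply Rabs_le.
        assert (x <= f x) by (apply Hbelow; lra).
        assert (f x <= f xbar) by (apply Hmax; lra).
        assert (L0 * (p - xbar) <= p - xbar) by nra. lra. }
    destruct (classic (exists N, forall k, (N <= k)%nat -> fp_iter f x0 k < xbar)) as [[N HN]|Hn].
    + set (y0 := fp_iter f x0 N).
      assert (Hy : forall k, fp_iter f y0 k < xbar).
      { intros k. unfold y0. rewrite <- iter_shift. apply HN. lia. }
      assert (Hy' : forall k, 0 <= fp_iter f y0 k <= abar).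
      { intros k. unfold y0. rewrite <- iter_shift. apply Hin. }
      destruct (conv_up abar f y0) as [l Hl]; auto.
      { intros k; simpl. apply Hbelow. pose proof (Hy k); pose proof (Hy' k); lra. }
      apply cv_from in Hl.
      destruct (limit_fixed abar f K x0 l Hf HK HLK Hx0 Hl) as [H1 H2].
      exists l; auto.
    + assert (Hinf : forall N, exists k, (N <= k)%nat /\ xbar <= fp_iter f x0 k).
      { intros N. apply NNPP. intro Hc. apply Hn. exists N. intros k Hk.
        apply Rnot_le_lt. intro. apply Hc. eauto. }
      exists p. split; [exact Hpin|]. split; [exact Hfp|].
      set (d := fun k => Rabs (fp_iter f x0 k - p)).
      assert (dS : forall k, d (S k) <= d k).
      { intros k. unfold d. simpl. apply dist. apply Hin. }
      assert (dmono : forall j k, (j <= k)%nat -> d k <= d j).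
      { intros j k Hjk. induction Hjk. lra. eapply Rle_trans. apply dS. auto. }
      assert (claim : forall n, exists N, forall k, (N <= k)%nat -> d k <= L0 ^ n * abar).
      { induction n as [|n [N HN]].
        - exists 0%nat. intros k _. simpl. apply (Rle_trans _ (d 0%nat)). apply dmono; lia.
          unfold d; simpl. apply Rabs_le. lra.
        - destruct (Hinf N) as [k' [Hk1 Hk2]]. exists (S k'). intros k Hk.
          eapply Rle_trans. apply dmono. exact Hk.
          unfold d at 1. simpl. eapply Rle_trans. apply contr. split; auto. apply Hin.
          simpl. rewrite Rmult_assoc. apply Rmult_le_compat_l; auto. apply HN; auto. }
      intros eps Heps.
      destruct (pow_lt_1_zero L0 ltac:(rewrite Rabs_pos_eq; lra) (eps / (abar + 1)))
        as [M HM].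
      { apply Rdiv_lt_0_compat; lra. }
      destruct (claim M) as [N HN]. exists N. intros k Hk. unfold Rdist.
      specialize (HN k Hk). unfold d in HN.
      specialize (HM M (le_n _)). rewrite Rabs_pos_eq in HM by (apply pow_le; lra).
      assert (Hq : eps / (abar + 1) * (abar + 1) = eps) by (field; lra).
      assert (0 <= L0 ^ M) by (apply pow_le; lra).
      nra.
Qed.
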